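(* Let $H\in\mathbb{R}^{\ell\times\ell}$ be symmetric, $0\ne g_0\in\mathbb{R}^\ell$, $\gamma>0$, and consider pLGopt and pQEPmin defined in the context. (1) Let $(\lambda_*,y_* )$ be a minimizer of pLGopt. Then either $\lambda_*<\lambda_{\min}(H)$ or $\lambda_*=\lambda_{\min}(H)$, and there exists $w_*$ such that $(\lambda_*,w_* )$ is a minimizer of pQEPmin; specifically $w_*=(H-\lambda_*I)^{-1}y_*$ if $\lambda_*<\lambda_{\min}(H)$, and $w_*$ is a corresponding eigenvector of $H$ if $\lambda_*=\lambda_{\min}(H)$. (2) Conversely, if $(\lambda_*,w_* )$ is a minimizer of pQEPmin, then there exists $y_*$ such that $(\lambda_*,y_* )$ is a minimizer of pLGopt; specifically $y_*=-\frac{\gamma^2}{g_0^{\top}w_*}(H-\lambda_*I)w_*$ if $g_0^{\top}w_*\ne0$, and $y_*=x_*+\sqrt{\gamma^2-\|x_*\|^2}\,\frac{w_*}{\|w_*\|}$ if $g_0^{\top}w_*=0$, where in the latter case $x_*=-(H-\lambda_*I)^{\dagger}g_0$, and it is guaranteed that $\|x_*\|\le\gamma$.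
   Context: pLGopt: minimize $\lambda$ over pairs $(\lambda,y)\in\mathbb{R}\times\mathbb{R}^\ell$ with $(H-\lambda I)y=-g_0$ and $\|y\|=\gamma$. pQEPmin: minimize $\lambda$ over pairs $(\lambda,w)$ with $\lambda\in\mathbb{R}$, $0\ne w\in\mathbb{R}^\ell$ and $(H-\lambda I)^2w=\gamma^{-2}g_0g_0^{\top}w$. $\lambda_{\min}(H)$ is the smallest eigenvalue of $H$; $X^\dagger$ is the Moore–Penrose inverse; norms are Euclidean. *)

(* Defs.v *)
From HB Require Import structures.
From mathcomp Require Import all_boot all_order all_algebra.
Set Implicit Arguments. Unset Strict Implicit. Unset Printing Implicit Defensive.
Import Order.TTheory GRing.Theory Num.Theory.
Local Open Scope ring_scope.

Definition dotv (R : rcfType) (n : nat) (u v : 'cV[R]_n) : R := (u^T *m v) 0 0.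
Definition vnorm (R : rcfType) (n : nat) (v : 'cV[R]_n) : R := Num.sqrt (dotv v v).

(* Moore-Penrose inverse: X is the (unique) matrix satisfying the four
   Penrose conditions for A (real case, so adjoint = transpose). *)
Definition is_MP_inverse (R : rcfType) (m n : nat) (A : 'M[R]_(m, n)) (X : 'M[R]_(n, m)) : Prop :=
  [/\ A *m X *m A = A, X *m A *m X = X, (A *m X)^T = A *m X & (X *m A)^T = X *m A].

Definition LG_feasible (R : rcfType) (n : nat) (H : 'M[R]_n) (g0 : 'cV[R]_n) (gamma : R)
  (lam : R) (y : 'cV[R]_n) : Prop :=
  (H - lam%:M) *m y = - g0 /\ vnorm y = gamma.

Definition LG_minimizer (R : rcfType) (n : nat) (H : 'M[R]_n) (g0 : 'cV[R]_n) (gamma : R)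
  (lam : R) (y : 'cV[R]_n) : Prop :=
  LG_feasible H g0 gamma lam y /\
  forall lam' y', LG_feasible H g0 gamma lam' y' -> lam <= lam'.

Definition QEP_feasible (R : rcfType) (n : nat) (H : 'M[R]_n) (g0 : 'cV[R]_n) (gamma : R)
  (lam : R) (w : 'cV[R]_n) : Prop :=
  w != 0 /\
  (H - lam%:M) *m ((H - lam%:M) *m w) = gamma ^- 2 *: (g0 *m g0^T *m w).

Definition QEP_minimizer (R : rcfType) (n : nat) (H : 'M[R]_n) (g0 : 'cV[R]_n) (gamma : R)
  (lam : R) (w : 'cV[R]_n) : Prop :=
  QEP_feasible H g0 gamma lam w /\
  forall lam' w', QEP_feasible H g0 gamma lam' w' -> lam <= lam'.

(* Main.v *)
Require Import Defs.
From HB Require Import structures.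
From mathcomp Require Import all_boot all_order all_algebra.
From mathcomp Require Import ring lra.
From mathcomp Require Import spectral sesquilinear.
From mathcomp.real_closed Require Import complex.
From Stdlib Require Import Classical.
Set Implicit Arguments. Unset Strict Implicit. Unset Printing Implicit Defensive.
Import Order.TTheory GRing.Theory Num.Theory.
Local Open Scope ring_scope.

Section Vec.
Variables (R : rcfType) (n : nat).
Implicit Types (u v w : 'cV[R]_n) (A : 'M[R]_n).

Lemma dotvE u v : dotv u v = \sum_i u i 0 * v i 0.
Proof. by rewrite /dotv mxE; apply: eq_bigr => i _; rewrite mxE. Qed.

Lemma dotvC u v : dotv u v = dotv v u.
Proof. by rewrite !dotvE; apply: eq_bigr => i _; rewrite mulrC. Qed.

Lemma dotvDr u v w : dotv u (v + w) = dotv u v + dotv u w.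
Proof. by rewrite /dotv mulmxDr mxE. Qed.

Lemma dotvDl u v w : dotv (v + w) u = dotv v u + dotv w u.
Proof. by rewrite dotvC dotvDr !(dotvC u). Qed.

Lemma dotvZr a u v : dotv u (a *: v) = a * dotv u v.
Proof. by rewrite /dotv -scalemxAr mxE. Qed.

Lemma dotvZl a u v : dotv (a *: u) v = a * dotv u v.
Proof. by rewrite dotvC dotvZr dotvC. Qed.

Lemma dotvNr u v : dotv u (- v) = - dotv u v.
Proof. by rewrite -scaleN1r dotvZr mulN1r. Qed.

Lemma dotvNl u v : dotv (- u) v = - dotv u v.
Proof. by rewrite dotvC dotvNr dotvC. Qed.

Lemma dotvBr u v w : dotv u (v - w) = dotv u v - dotv u w.
Proof. by rewrite dotvDr dotvNr. Qed.

Lemma dotvBl u v w : dotv (v - w) u = dotv v u - dotv w u.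
Proof. by rewrite dotvDl dotvNl. Qed.

Lemma dotv0r u : dotv u 0 = 0.
Proof. by rewrite /dotv mulmx0 mxE. Qed.

Lemma dotv0l u : dotv 0 u = 0.
Proof. by rewrite dotvC dotv0r. Qed.

Lemma dotv_mul A u v : dotv (A *m u) v = dotv u (A^T *m v).
Proof. by rewrite /dotv trmx_mul mulmxA. Qed.

Lemma dotv_ge0 u : 0 <= dotv u u.
Proof. by rewrite dotvE; apply: sumr_ge0 => i _; rewrite -expr2 sqr_ge0. Qed.

Lemma dotv_eq0 u : (dotv u u == 0) = (u == 0).
Proof.
apply/idP/idP => [|/eqP->]; last by rewrite dotv0r.
rewrite dotvE psumr_eq0 => [/allP h|i _]; last by rewrite -expr2 sqr_ge0.
apply/eqP/matrixP => i j; rewrite ord1 mxE.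
by have := h i (mem_index_enum i); rewrite /= -expr2 sqrf_eq0 => /eqP.
Qed.

Lemma vnorm_ge0 u : 0 <= vnorm u.
Proof. exact: sqrtr_ge0. Qed.

Lemma vnorm_sqr u : vnorm u ^+ 2 = dotv u u.
Proof. by rewrite /vnorm sqr_sqrtr // dotv_ge0. Qed.

Lemma vnorm0 : vnorm (0 : 'cV[R]_n) = 0.
Proof. by rewrite /vnorm dotv0r sqrtr0. Qed.

Lemma vnorm_eq0 u : (vnorm u == 0) = (u == 0).
Proof. by rewrite /vnorm sqrtr_eq0 -dotv_eq0 eq_le dotv_ge0 andbT. Qed.

Lemma vnormZ a u : vnorm (a *: u) = `|a| * vnorm u.
Proof.
rewrite /vnorm dotvZl dotvZr mulrA -expr2 sqrtrM ?sqr_ge0 //.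
by rewrite sqrtr_sqr.
Qed.

Lemma vnormN u : vnorm (- u) = vnorm u.
Proof. by rewrite -scaleN1r vnormZ normrN1 mul1r. Qed.

Lemma sqrt_sqr_ge0 (a : R) : 0 <= a -> Num.sqrt (a ^+ 2) = a.
Proof. by move=> a0; rewrite sqrtr_sqr ger0_norm. Qed.

Lemma le_sqr_ge0 (a b : R) : 0 <= b -> a ^+ 2 <= b ^+ 2 -> a <= b.
Proof.
move=> b0 h; have : `|a| <= b.
  by rewrite -(ler_pXn2r (isT : (0 < 2)%N)) ?nnegrE ?normr_ge0 // real_normK ?num_real.
by apply: le_trans; rewrite ler_norm.
Qed.

Lemma CS u v : dotv u v ^+ 2 <= dotv u u * dotv v v.
Proof.
have [->|u0] := eqVneq u 0; first by rewrite !dotv0l expr0n mul0r.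
set a := dotv u u; set b := dotv v v; set c := dotv u v.
have a0 : 0 < a by rewrite lt_def dotv_eq0 u0 dotv_ge0.
have := dotv_ge0 (a *: v - c *: u).
rewrite !(dotvBl, dotvBr, dotvZl, dotvZr) -/a -/b -/c (dotvC v u) -/c.
move=> h.
have : 0 <= a * (a * b - c ^+ 2) by move: h; congr (_ <= _); ring.
by rewrite pmulr_rge0 // subr_ge0.
Qed.

Lemma CSn u v : `|dotv u v| <= vnorm u * vnorm v.
Proof.
apply: le_sqr_ge0; first by rewrite mulr_ge0 ?vnorm_ge0.
by rewrite real_normK ?num_real // exprMn !vnorm_sqr CS.
Qed.

Lemma vnormD u v : vnorm (u + v) <= vnorm u + vnorm v.
Proof.
apply: le_sqr_ge0; first by rewrite addr_ge0 ?vnorm_ge0.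
rewrite vnorm_sqr !(dotvDl, dotvDr) sqrrD !vnorm_sqr (dotvC v u).
have := CSn u v; have := ler_norm (dotv u v); lra.
Qed.

Lemma le_eps (a K : R) : 0 <= K -> (forall e, 0 < e -> a <= e * K) -> a <= 0.
Proof.
move=> K0 h; rewrite leNgt; apply/negP => a0.
have e0 : 0 < a / (K + 1) by rewrite divr_gt0 // ltr_wpDl.
have := h _ e0; rewrite mulrAC ler_pdivlMr ?ltr_wpDl //.
rewrite mulrDr mulr1; lra.
Qed.

Lemma mx11_dot (g h : 'cV[R]_n) w : g *m h^T *m w = dotv h w *: g.
Proof. by rewrite -mulmxA [h^T *m w]mx11_scalar mul_mx_scalar. Qed.

End Vec.

Section PSD.
Variable R : rcfType.
Local Notation f := (real_complex R).
Local Open Scope sesquilinear_scope.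

Lemma psd_lmin n (H : 'M[R]_n) (lmin : R) : H^T = H ->
  (forall a, eigenvalue H a -> lmin <= a) ->
  forall u : 'cV[R]_n, lmin * (u^T *m u) 0 0 <= (u^T *m H *m u) 0 0.
Proof.
move=> HT hmin u.
have herm : map_mx f H \is hermsymmx.
  rewrite qualifE /= expr0 scale1r; apply/eqP/matrixP => i j; rewrite !mxE.
  have /matrixP/(_ j i) := HT; rewrite mxE => ->.
  exact: (esym (conjc_real _)).
have /orthomx_spectralP Hceq := hermitian_normalmx herm.
set Hc := map_mx f H in Hceq herm *.
set P := spectralmx Hc in Hceq; set d := spectral_diag Hc in Hceq.
have dreal := hermitian_spectral_diag_real herm.
have Pu : P \is unitarymx := spectral_unitarymx Hc.
have Punit : P \in unitmx := spectral_unit Hc.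
have iP : invmx P = P ^t* := invmx_unitary Pu.
have PPt : P *m P ^t* = 1%:M by rewrite -iP mulmxV.
have PtP : P ^t* *m P = 1%:M by rewrite -iP mulVmx.
have deig : forall i, exists2 r, d 0 i = f r & lmin <= r.
  move=> i; have /complex_realP [r dr] : d 0 i \is Num.real by apply: (mxOverP dreal).
  exists r => //; apply: hmin.
  have : eigenvalue Hc (d 0 i).
    apply/eigenvalueP; exists (row i P).
      rewrite -row_mul Hceq iP !mulmxA PPt mul1mx row_mul row_diag_mx.
      by rewrite -scalemxAl -rowE.
    apply/eqP => r0.
    have := congr1 (mulmx^~ (P ^t*)) r0; rewrite -row_mul PPt mul0mx row1.
    by move/matrixP/(_ 0 i); rewrite !mxE !eqxx /= => /eqP; rewrite oner_eq0.
  by rewrite !eigenvalue_root_char -map_char_poly dr fmorph_root.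
have key : forall (A : 'M[R]_n), f ((u^T *m A *m u) 0 0) =
    ((map_mx f u)^T *m map_mx f A *m map_mx f u) 0 0.
  move=> A; rewrite (map_trmx f u) -!map_mxM. by rewrite [RHS]mxE.
set uc := map_mx f u in key.
have ucT : uc^T = uc ^t*.
  by apply/matrixP => i j; rewrite !mxE; exact: (esym (conjc_real _)).
set z := P *m uc.
have zt : uc^T *m P ^t* = z ^t* by rewrite /z trmx_mul map_mxM -ucT.
rewrite -lecR rmorphM /=.
have -> : (u^T *m u) = u^T *m 1%:M *m u by rewrite mulmx1.
rewrite !key map_mx1 -/Hc Hceq -PtP iP.
have e1 : uc^T *m (P ^t* *m P) *m uc = z ^t* *m z by rewrite mulmxA zt -mulmxA.
have e2 : uc^T *m (P ^t* *m diag_mx d *m P) *m uc = z ^t* *m diag_mx d *m z.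
  by rewrite !mulmxA zt -mulmxA.
rewrite e1 e2; clearbody z.
rewrite mul_mx_diag !mxE mulr_sumr -subr_ge0 -sumrB; apply: sumr_ge0 => k _.
rewrite !mxE; have [r -> hr] := deig k.
set c := z k 0.
have -> : c^* * f r * c - f lmin * (c^* * c) = (f r - f lmin) * (c * c^*) by ring.
apply: mulr_ge0; first by rewrite subr_ge0 lecR.
exact: mul_conjC_ge0.
Qed.
End PSD.

Section Main.
Variables (R : rcfType) (n : nat) (H : 'M[R]_n) (g0 : 'cV[R]_n) (gamma lmin : R).
Hypotheses (HT : H^T = H) (gpos : 0 < gamma)
  (hmin : forall a, eigenvalue H a -> lmin <= a) (heig : eigenvalue H lmin).

Local Notation A l := (H - l%:M).
Local Notation A0 := (H - lmin%:M).
Implicit Types (u v w y : 'cV[R]_n).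

Lemma AT l : (A l)^T = A l.
Proof. by rewrite linearB /= tr_scalar_mx HT. Qed.

Lemma dotvA l u v : dotv (A l *m u) v = dotv u (A l *m v).
Proof. by rewrite dotv_mul AT. Qed.

Lemma col_eig a : eigenvalue H a -> exists2 w : 'cV[R]_n, w != 0 & H *m w = a *: w.
Proof.
case/eigenvalueP => v hv v0; exists v^T.
  by apply: contra v0 => /eqP h; rewrite -[v]trmxK h trmx0.
by rewrite -{1}HT -trmx_mul hv linearZ.
Qed.

Lemma eig_col a (w : 'cV[R]_n) : w != 0 -> A a *m w = 0 -> eigenvalue H a.
Proof.
move=> w0 hw; apply/eigenvalueP; exists w^T.
  have : (A a *m w)^T = 0 by rewrite hw trmx0.
  rewrite trmx_mul AT mulmxBr mul_mx_scalar => /eqP; rewrite subr_eq0 => /eqP.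
  by [].
by apply: contra w0 => /eqP h; rewrite -[w]trmxK h trmx0.
Qed.

Lemma A_eig a (w : 'cV[R]_n) : A a *m w = 0 -> H *m w = a *: w.
Proof. by rewrite mulmxBl mul_scalar_mx => /eqP; rewrite subr_eq0 => /eqP. Qed.

Lemma unitA l : l < lmin -> A l \in unitmx.
Proof.
move=> hl; rewrite unitmxE unitfE; apply/negP => /det0P [v v0 hv].
have : eigenvalue H l.
  apply/eigenvalueP; exists v => //.
  by move: hv; rewrite mulmxBr mul_mx_scalar => /eqP; rewrite subr_eq0 => /eqP.
by move/hmin; rewrite leNgt hl.
Qed.

Lemma psdA0 u : 0 <= dotv u (A0 *m u).
Proof.
have := psd_lmin HT hmin u.
rewrite mulmxBl mul_scalar_mx dotvBr dotvZr /dotv mulmxA subr_ge0 mulrC.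
by [].
Qed.

Lemma Aeps e u : A (lmin - e) *m u = A0 *m u + e *: u.
Proof.
have -> : (lmin - e)%:M = lmin%:M - e%:M :> 'M[R]_n by rewrite raddfB.
by rewrite opprB (addrC e%:M) addrA mulmxDl mul_scalar_mx.
Qed.

Lemma coer e u : 0 < e -> e * vnorm u <= vnorm (A (lmin - e) *m u).
Proof.
move=> e0; apply: le_sqr_ge0; first exact: vnorm_ge0.
rewrite exprMn !vnorm_sqr Aeps !(dotvDl, dotvDr, dotvZl, dotvZr).
have := psdA0 u; have := dotv_ge0 (A0 *m u).
rewrite [dotv (A0 *m u) u]dotvC.
have := dotv_ge0 u. move=> h1 h2 h3.
have : 0 <= e * dotv u (A0 *m u) by rewrite mulr_ge0 // ltW.
nra.
Qed.

Lemma y_neq0 y : vnorm y = gamma -> y != 0.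
Proof.
move=> ny; apply/eqP => y0; move: gpos; rewrite -ny y0 vnorm0 ltxx //.
Qed.

Lemma vnorm_eq u (g : R) : 0 <= g -> dotv u u = g ^+ 2 -> vnorm u = g.
Proof. by move=> g0' h; rewrite /vnorm h sqrtr_sqr ger0_norm. Qed.

Lemma gam0 : gamma != 0. Proof. by rewrite gt_eqF. Qed.

Lemma LtoQ l y : LG_feasible H g0 gamma l y -> l < lmin ->
  QEP_feasible H g0 gamma l (invmx (A l) *m y).
Proof.
move=> [hy ny] hl; have U := unitA hl.
set w := invmx (A l) *m y.
have Aw : A l *m w = y by rewrite /w mulKVmx.
have y0 := y_neq0 ny.
split; first by apply: contra y0 => /eqP w0; rewrite -Aw w0 mulmx0.
rewrite Aw hy mx11_dot.
have -> : dotv g0 w = - gamma ^+ 2.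
  rewrite /w dotvC dotv_mul trmx_inv AT -[g0]opprK -hy mulmxN mulKmx //.
  by rewrite dotvNr -vnorm_sqr ny.
rewrite scalerA mulrN mulVf ?expf_neq0 ?gam0 //.
by rewrite scaleN1r.
Qed.

Lemma QtoL l w : QEP_feasible H g0 gamma l w -> dotv g0 w != 0 ->
  LG_feasible H g0 gamma l (- (gamma ^+ 2 / dotv g0 w) *: (A l *m w)).
Proof.
move=> [w0 hw] c0; set c := dotv g0 w in c0 *.
have hw' : A l *m (A l *m w) = (gamma ^-2 * c) *: g0 by rewrite hw mx11_dot scalerA.
split.
  rewrite -scalemxAr hw' scalerA.
  have -> : - (gamma ^+ 2 / c) * (gamma ^-2 * c) = -1 by field; rewrite gam0 c0.
  by rewrite scaleN1r.
apply: vnorm_eq; first exact: ltW.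
rewrite dotvZl dotvZr dotvA hw' dotvZr (dotvC w) -/c.
field; by rewrite gam0 c0.
Qed.

Lemma Q0 l w : QEP_feasible H g0 gamma l w -> dotv g0 w = 0 -> A l *m w = 0.
Proof.
move=> [w0 hw] c0; apply/eqP; rewrite -dotv_eq0 dotvA hw mx11_dot c0.
by rewrite scale0r scaler0 dotv0r.
Qed.

Lemma Q0le l w : QEP_feasible H g0 gamma l w -> dotv g0 w = 0 -> lmin <= l.
Proof. by move=> hq c0; apply/hmin/(eig_col (proj1 hq))/(Q0 hq c0). Qed.

Lemma LG_lmin_Q y w : LG_feasible H g0 gamma lmin y -> w != 0 -> A0 *m w = 0 ->
  QEP_feasible H g0 gamma lmin w.
Proof.
move=> [hy ny] w0 hw; split => //.
rewrite hw mulmx0 mx11_dot -[g0]opprK -hy dotvNl dotvA hw dotv0r oppr0.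
by rewrite scale0r scaler0.
Qed.

Definition xl l := - (invmx (A l) *m g0).

Lemma Axl l : l < lmin -> A l *m xl l = - g0.
Proof. by move=> hl; rewrite /xl mulmxN mulKVmx // unitA. Qed.

Lemma ivt2 (p : {poly R}) a b : p.[a] <= 0 -> 0 <= p.[b] ->
  exists2 x, (x <= a) || (x <= b) & root p x.
Proof.
move=> pa pb; have [ab|ba] := leP a b.
  have h : p.[a] <= 0 <= p.[b] by rewrite pa pb.
  have [x /andP[_ xb] rx] := @poly_ivt R p a b ab h.
  by exists x; rewrite ?xb ?orbT.
have [x /andP[_ xa] rx] : exists2 x, b <= x <= a & root (- p) x.
  by apply: poly_ivt; [exact: ltW | rewrite !hornerN oppr_le0 oppr_ge0 pb pa].
by exists x; rewrite ?xa //; move: rx; rewrite !rootE hornerN oppr_eq0.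
Qed.

Lemma Qpoly : exists Q : {poly R}, forall t,
  Q.[t] = gamma ^+ 2 * (\det (A t)) ^+ 2 - dotv (\adj (A t) *m g0) (\adj (A t) *m g0).
Proof.
pose Ap : 'M[{poly R}]_n := map_mx polyC H - 'X%:M.
pose gp := map_mx polyC g0.
exists ((gamma ^+ 2)%:P * (\det Ap) ^+ 2 - ((\adj Ap *m gp)^T *m (\adj Ap *m gp)) 0 0).
move=> t; rewrite -horner_evalE rmorphB rmorphM !rmorphXn /= {1}horner_evalE hornerC.
have mapA : map_mx (horner_eval t) Ap = A t.
  rewrite map_mxB map_scalar_mx /= horner_evalE hornerX -map_mx_comp.
  by rewrite (map_mx_id (fun x => hornerC x t)).
have mapg : map_mx (horner_eval t) gp = g0.
  by rewrite -map_mx_comp (map_mx_id (fun x => hornerC x t)).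
rewrite -det_map_mx mapA; congr (_ - _).
have -> : forall M : 'M[{poly R}]_1, horner_eval t (M 0 0) = (map_mx (horner_eval t) M) 0 0.
  by move=> M; rewrite mxE.
rewrite /dotv map_mxM -map_trmx map_mxM map_mx_adj mapA mapg.
by [].
Qed.

Lemma K1 : (forall l y, l < lmin -> ~ LG_feasible H g0 gamma l y) ->
  forall l, l < lmin -> dotv (xl l) (xl l) < gamma ^+ 2.
Proof.
move=> noLG l1 hl1; rewrite ltNge; apply/negP => h1.
have [Q hQ] := Qpoly.
have hQx : forall t, t < lmin ->
    Q.[t] = (\det (A t)) ^+ 2 * (gamma ^+ 2 - dotv (xl t) (xl t)).
  move=> t ht; rewrite hQ /xl /invmx unitA // -scalemxAl dotvNl dotvNr opprK.
  rewrite dotvZl dotvZr.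
  have d0 : \det (A t) != 0 by rewrite -unitfE -unitmxE unitA.
  by field.
pose e0 := vnorm g0 / gamma + 1.
have e0p : 0 < e0 by rewrite ltr_wpDl // divr_ge0 ?vnorm_ge0 ?ltW.
pose l0 := lmin - e0.
have hl0 : l0 < lmin by rewrite ltrBlDr ltrDl.
have h0 : dotv (xl l0) (xl l0) < gamma ^+ 2.
  have := coer (xl l0) e0p; rewrite -/l0 Axl // vnormN => hc.
  have hv : vnorm (xl l0) < gamma.
    have : vnorm g0 < gamma * e0.
      by rewrite /e0 mulrDr mulr1 mulrC divfK ?gam0 // ltrDl.
    have := vnorm_ge0 (xl l0); nra.
  rewrite -vnorm_sqr; have := vnorm_ge0 (xl l0); nra.
have [r hr rootr] : exists2 r, (r <= l1) || (r <= l0) & root Q r.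
  apply: ivt2; first by rewrite hQx // mulr_ge0_le0 ?sqr_ge0 // subr_le0.
  by rewrite hQx // mulr_ge0 ?sqr_ge0 // subr_ge0 ltW.
have rl : r < lmin by case/orP: hr => hr; apply: le_lt_trans hr _.
apply: (noLG r (xl r) rl); split; first exact: Axl.
apply: vnorm_eq; first exact: ltW.
have d0 : \det (A r) != 0 by rewrite -unitfE -unitmxE unitA.
move: rootr; rewrite rootE hQx // mulf_eq0 expf_eq0 /= (negbTE d0) /=.
by rewrite subr_eq0 => /eqP <-.
Qed.

Section NoLG.
Hypothesis noLG : forall l y, l < lmin -> ~ LG_feasible H g0 gamma l y.

Lemma xe_lt e : 0 < e -> vnorm (xl (lmin - e)) < gamma.
Proof.
move=> e0; have hl : lmin - e < lmin by rewrite ltrBlDr ltrDl.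
have := K1 noLG hl; rewrite -vnorm_sqr.
by rewrite (ltr_pXn2r (_ : (0 < 2)%N)) ?nnegrE ?vnorm_ge0 ?ltW.
Qed.

Lemma K2 v : A0 *m v = 0 -> dotv v g0 = 0.
Proof.
move=> hv; apply/eqP; rewrite -normr_le0.
apply: (le_eps (K := vnorm v * gamma)); first by rewrite mulr_ge0 ?vnorm_ge0 ?ltW.
move=> e e0; have hl : lmin - e < lmin by rewrite ltrBlDr ltrDl.
rewrite -[g0]opprK -(Axl hl) dotvNr normrN -dotvA Aeps hv add0r dotvZl normrM.
rewrite gtr0_norm //; apply: ler_wpM2l; first exact: ltW.
apply: le_trans (CSn _ _) _; apply: ler_wpM2l; first exact: vnorm_ge0.
exact: ltW (xe_lt e0).
Qed.

Lemma K3 : exists z, g0 = A0 *m (A0 *m z).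
Proof.
pose S := A0 *m A0.
have ST : S^T = S by rewrite /S trmx_mul AT.
have hker : forall v, S *m v = 0 -> dotv v g0 = 0.
  move=> v hv; apply: K2; apply/eqP; rewrite -dotv_eq0 dotvA mulmxA -/S hv.
  by rewrite dotv0r.
have : (g0^T <= S)%MS.
  rewrite submxE; have hC := mulmx_coker S; move: (cokermx S) hC => C hC.
  apply/eqP/matrixP => i j; rewrite ord1 [RHS]mxE.
  have -> : (g0^T *m C) 0 j = dotv g0 (col j C).
    by rewrite /dotv colE mulmxA -colE [RHS]mxE.
  rewrite dotvC; apply: hker.
  by rewrite colE mulmxA hC mul0mx.
case/submxP => D hD; exists D^T.
by rewrite mulmxA -/S -ST -trmx_mul -hD trmxK.
Qed.

Lemma K4 x z : x = A0 *m z -> A0 *m x = - g0 -> vnorm x <= gamma.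
Proof.
move=> hx hAx; rewrite -subr_le0.
apply: (le_eps (K := 2 * vnorm z)); first by rewrite mulr_ge0 ?vnorm_ge0.
move=> e e0; have hl : lmin - e < lmin by rewrite ltrBlDr ltrDl.
set B := A (lmin - e).
set xe := xl (lmin - e).
have Bxe : B *m xe = - g0 := Axl hl.
have Bx : B *m x = - g0 + e *: x by rewrite /B Aeps hAx.
have Bz : B *m z = x + e *: z by rewrite /B Aeps -hx.
pose d := x - xe - e *: z.
have Bd : B *m d = - (e ^+ 2) *: z.
  rewrite /d !mulmxBr -scalemxAr Bx Bxe Bz.
  by apply/matrixP => i j; rewrite !mxE; ring.
have hd : vnorm d <= e * vnorm z.
  have := coer d e0; rewrite -/B Bd vnormZ normrN ger0_norm ?sqr_ge0 //.
  by rewrite expr2 -mulrA ler_pM2l.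
have -> : x = xe + d + e *: z.
  by rewrite /d; apply/matrixP => i j; rewrite !mxE; ring.
have := vnormD (xe + d) (e *: z); have := vnormD xe d.
rewrite vnormZ gtr0_norm //.
have := xe_lt e0; rewrite -/xe; lra.
Qed.

Lemma construct x z v : A0 *m x = - g0 -> x = A0 *m z -> vnorm x <= gamma ->
  v != 0 -> A0 *m v = 0 ->
  LG_feasible H g0 gamma lmin (x + (Num.sqrt (gamma ^+ 2 - vnorm x ^+ 2) / vnorm v) *: v).
Proof.
move=> hAx hx hn v0 hv; split.
  by rewrite mulmxDr -scalemxAr hv scaler0 addr0.
apply: vnorm_eq; first exact: ltW.
have xv : dotv x v = 0 by rewrite hx dotvA hv dotv0r.
have nv0 : vnorm v != 0 by rewrite vnorm_eq0.
rewrite !(dotvDl, dotvDr, dotvZl, dotvZr) xv (dotvC v x) xv -vnorm_sqr.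
have s0 : 0 <= gamma ^+ 2 - vnorm x ^+ 2.
  by rewrite subr_ge0 (ler_pXn2r (_ : (0 < 2)%N)) // nnegrE ?vnorm_ge0 // ltW.
set s := Num.sqrt _.
have ss : s ^+ 2 = gamma ^+ 2 - vnorm x ^+ 2 by rewrite sqr_sqrtr.
rewrite -(vnorm_sqr v) !mulr0 !add0r addr0; move: ss nv0; set N := vnorm v.
move=> ss nv0.
have -> : s / N * (s / N * N ^+ 2) = s ^+ 2 by field.
by rewrite ss; ring.
Qed.

Lemma exists_lmin : exists y, LG_feasible H g0 gamma lmin y.
Proof.
have [z hz] := K3.
have [v v0 hv] := col_eig heig.
have hv' : A0 *m v = 0 by rewrite mulmxBl hv mul_scalar_mx subrr.
have hAx : A0 *m (- (A0 *m z)) = - g0 by rewrite mulmxN hz.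
have hx : - (A0 *m z) = A0 *m (- z) by rewrite mulmxN.
have hn := K4 hx hAx.
by eexists; apply: (construct hAx hx hn v0 hv').
Qed.

End NoLG.

Lemma exists_LG_le : exists l y, l <= lmin /\ LG_feasible H g0 gamma l y.
Proof.
case: (classic (exists l y, l < lmin /\ LG_feasible H g0 gamma l y)).
  by move=> [l [y [hl hy]]]; exists l, y; split => //; exact: ltW.
move=> h.
have noLG : forall l y, l < lmin -> ~ LG_feasible H g0 gamma l y.
  by move=> l y hl hy; apply: h; exists l, y.
by have [y hy] := exists_lmin noLG; exists lmin, y.
Qed.

Lemma LGmin_le l y : LG_minimizer H g0 gamma l y -> l <= lmin.
Proof.
by move=> [_ hm]; have [l' [y' [hl hy]]] := exists_LG_le; apply: le_trans (hm _ _ hy) hl.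
Qed.

Lemma exists_Q_le : exists l w, l <= lmin /\ QEP_feasible H g0 gamma l w.
Proof.
have [l [y [hl hy]]] := exists_LG_le.
move: hl; rewrite le_eqVlt => /orP [/eqP el|hl].
  have [w w0 hw] := col_eig heig.
  exists lmin, w; split => //; rewrite el in hy; apply: (LG_lmin_Q hy w0).
  by rewrite mulmxBl hw mul_scalar_mx subrr.
by exists l, (invmx (A l) *m y); split; [exact: ltW | exact: LtoQ].
Qed.

Lemma QEPmin_le l w : QEP_minimizer H g0 gamma l w -> l <= lmin.
Proof.
by move=> [_ hm]; have [l' [w' [hl hw]]] := exists_Q_le; apply: le_trans (hm _ _ hw) hl.
Qed.

Lemma QEP_lb l : (forall l' y', LG_feasible H g0 gamma l' y' -> l <= l') -> l <= lmin ->
  forall l' w', QEP_feasible H g0 gamma l' w' -> l <= l'.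
Proof.
move=> hm hl l' w' hq; have [c0|c0] := eqVneq (dotv g0 w') 0.
  exact: le_trans hl (Q0le hq c0).
exact: hm _ _ (QtoL hq c0).
Qed.

Lemma LG_lb l : (forall l' w', QEP_feasible H g0 gamma l' w' -> l <= l') -> l <= lmin ->
  forall l' y', LG_feasible H g0 gamma l' y' -> l <= l'.
Proof.
move=> hm hl l' y' hy; have [hl'|hl'] := ltP l' lmin.
  exact: hm _ _ (LtoQ hy hl').
exact: le_trans hl hl'.
Qed.

Lemma main_sec :
  (forall lam y, LG_minimizer H g0 gamma lam y ->
     (lam < lmin /\ QEP_minimizer H g0 gamma lam (invmx (H - lam%:M) *m y)) \/
     (lam = lmin /\ exists w : 'cV[R]_n,
          w != 0 /\ H *m w = lmin *: w /\ QEP_minimizer H g0 gamma lam w))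
  /\
  (forall lam w, QEP_minimizer H g0 gamma lam w ->
     (dotv g0 w != 0 ->
        LG_minimizer H g0 gamma lam
          (- (gamma ^+ 2 / dotv g0 w) *: ((H - lam%:M) *m w))) /\
     (dotv g0 w = 0 ->
        forall X : 'M[R]_n, is_MP_inverse (H - lam%:M) X ->
        let x := - (X *m g0) in
        vnorm x <= gamma /\
        LG_minimizer H g0 gamma lam
          (x + (Num.sqrt (gamma ^+ 2 - vnorm x ^+ 2) / vnorm w) *: w))).
Proof.
split.
  move=> lam y hmin'; have hle := LGmin_le hmin'; case: hmin' => hy hym.
  move: hle; rewrite le_eqVlt => /orP [/eqP el|hlt].
    right; split => //; have [w w0 hw] := col_eig heig.
    exists w; split => //; split => //; split.
      rewrite el in hy *; apply: (LG_lmin_Q hy w0).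
      by rewrite mulmxBl hw mul_scalar_mx subrr.
    by apply: QEP_lb => //; rewrite el.
  left; split => //; split; first exact: LtoQ.
  by apply: QEP_lb => //; exact: ltW.
move=> lam w hmin'; have hle := QEPmin_le hmin'; case: hmin' => hq hqm.
split.
  move=> c0; split; first exact: QtoL.
  exact: LG_lb.
move=> c0 X [X1 X2 X3 X4] x.
have el : lam = lmin by apply/le_anti; rewrite hle (Q0le hq c0).
rewrite el in hq hqm X1 X2 X3 X4 *.
have noLG : forall l y, l < lmin -> ~ LG_feasible H g0 gamma l y.
  move=> l y hl hy; have := hqm _ _ (LtoQ hy hl); rewrite leNgt hl //.
have [z hz] := K3 noLG.
have hAXg : A0 *m (X *m g0) = g0 by rewrite hz !mulmxA X1.
have hAx : A0 *m x = - g0 by rewrite /x mulmxN hAXg.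
have eX : X = A0 *m X^T *m X by rewrite -{1}X2 -X4 trmx_mul AT.
have hx : x = A0 *m (- (X^T *m (X *m g0))).
  by rewrite /x {1}eX mulmxN !mulmxA.
have hn := K4 noLG hx hAx.
have hw := Q0 hq c0.
split => //; split; first exact: (construct hAx hx hn (proj1 hq) hw).
by apply: LG_lb => //.
Qed.

End Main.

Theorem theorem2p5 (R : rcfType) (n : nat) (H : 'M[R]_n) (g0 : 'cV[R]_n) (gamma : R)
  (lmin : R) :
  H^T = H -> g0 != 0 -> 0 < gamma ->
  (* lmin = lambda_min(H): an eigenvalue of H below all eigenvalues of H *)
  eigenvalue H lmin -> (forall a, eigenvalue H a -> lmin <= a) ->
  (forall lam y, LG_minimizer H g0 gamma lam y ->
     (lam < lmin /\ QEP_minimizer H g0 gamma lam (invmx (H - lam%:M) *m y)) \/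
     (lam = lmin /\ exists w : 'cV[R]_n,
          w != 0 /\ H *m w = lmin *: w /\ QEP_minimizer H g0 gamma lam w))
  /\
  (forall lam w, QEP_minimizer H g0 gamma lam w ->
     (dotv g0 w != 0 ->
        LG_minimizer H g0 gamma lam
          (- (gamma ^+ 2 / dotv g0 w) *: ((H - lam%:M) *m w))) /\
     (dotv g0 w = 0 ->
        forall X : 'M[R]_n, is_MP_inverse (H - lam%:M) X ->
        let x := - (X *m g0) in
        vnorm x <= gamma /\
        LG_minimizer H g0 gamma lam
          (x + (Num.sqrt (gamma ^+ 2 - vnorm x ^+ 2) / vnorm w) *: w))).
Proof.
move=> HT _ gpos heig hmin.
by apply: main_sec.
Qed.
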